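(* Let $\epsilon>0$ and let $\mathcal C_\epsilon$ be an extended set of extreme points. Then for any sequence $\vec b_1,\dots,\vec b_T$ of buyer valuations from the types $\vec v_1,\dots,\vec v_V$ and any menu $\vec\rho^*$ maximizing $\sum_{t=1}^T u(\vec b_t,\vec\rho)$ over all length-$\ell$ menus, $$\max_{\vec\rho\in\mathcal C_\epsilon}\sum_{t=1}^T u(\vec b_t,\vec\rho)\ \ge\ \sum_{t=1}^T u(\vec b_t,\vec\rho^* )-2K\epsilon T.$$
   Context: A length-$\ell$ menu of two-part tariffs is parameterized by $\vec\rho=(p_1^{(1)},p_2^{(1)},\dots,p_1^{(\ell)},p_2^{(\ell)})\in[0,H]^{2\ell}$. A buyer valuation $\vec v=(v(1),\dots,v(K))$ is nondecreasing in $[0,H]$ with $v(0)=0$; the buyer chooses a menu option $(j,k)$, $j\in[\ell]$, $k\in\{0,\dots,K\}$, maximizing $v(k)-\mathbf 1[k\ge1](p_1^{(j)}+kp_2^{(j)})$, and revenue $u(\vec v,\vec\rho)$ is its payment. There are finitely many known buyer types $\vec v_1,\dots,\vec v_V$. A mapping $\mu$ assigns to each type a menu option; it is feasible if some menu induces every type to choose its assigned option; $\lambda_\mu$ is the set of menus inducing $\mu$. An extended set of extreme points $\mathcal C_\epsilon$ is a set of menus such that for every feasible $\mu$ and every extreme point $\vec\rho$ of the closure of $\lambda_\mu$: if $\vec\rho\in\lambda_\mu$ then $\vec\rho\in\mathcal C_\epsilon$, and otherwise there is $\vec\rho'\in\mathcal C_\epsilon\cap\lambda_\mu$ with $\|\vec\rho-\vec\rho'\|_1\le\epsilon$.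 *)

(* Defs.v *)
From mathcomp Require Import all_boot all_order all_algebra.
From mathcomp Require Import reals.
Set Implicit Arguments. Unset Strict Implicit. Unset Printing Implicit Defensive.
Import Order.TTheory GRing.Theory Num.Theory.
Local Open Scope ring_scope.

Section TwoPartTariffs.
Variables (R : realType) (l K : nat).

(* A length-l menu of two-part tariffs: rho.1 j = p_1^(j), rho.2 j = p_2^(j). *)
Definition menu := ({ffun 'I_l -> R} * {ffun 'I_l -> R})%type.

(* A menu option (j, k): tariff j, quantity k in {0, ..., K}. *)
Definition moption := ('I_l * 'I_K.+1)%type.

Definition payment (rho : menu) (o : moption) : R :=
  if (0 < (o.2 : nat))%N then rho.1 o.1 + (o.2 : nat)%:R * rho.2 o.1 else 0.

(* Buyer utility v(k) - payment. A valuation is a function nat -> R,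
   of which only the values at 0..K matter. *)
Definition utility (v : nat -> R) (rho : menu) (o : moption) : R :=
  v (o.2 : nat) - payment rho o.

Definition is_valuation (H : R) (v : nat -> R) : Prop :=
  v 0%N = 0 /\ (forall k, (k <= K)%N -> 0 <= v k <= H) /\
  (forall j k, (j <= k)%N -> (k <= K)%N -> v j <= v k).

Definition in_box (H : R) (rho : menu) : Prop :=
  forall j, (0 <= rho.1 j <= H) /\ (0 <= rho.2 j <= H).

Definition utility_maximizing (choose : (nat -> R) -> menu -> moption) : Prop :=
  forall v rho o, utility v rho o <= utility v rho (choose v rho).

Definition revenue (choose : (nat -> R) -> menu -> moption)
  (v : nat -> R) (rho : menu) : R := payment rho (choose v rho).

Definition induces (choose : (nat -> R) -> menu -> moption) (V : nat)
  (vs : 'I_V -> nat -> R) (rho : menu) (mu : 'I_V -> moption) : Prop :=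
  forall i, choose (vs i) rho = mu i.

Definition lambda_set (choose : (nat -> R) -> menu -> moption) (H : R) (V : nat)
  (vs : 'I_V -> nat -> R) (mu : 'I_V -> moption) : menu -> Prop :=
  fun rho => in_box H rho /\ induces choose vs rho mu.

Definition feasible (choose : (nat -> R) -> menu -> moption) (H : R) (V : nat)
  (vs : 'I_V -> nat -> R) (mu : 'I_V -> moption) : Prop :=
  exists rho, lambda_set choose H vs mu rho.

Definition l1dist (rho rho' : menu) : R :=
  \sum_(j < l) (`|rho.1 j - rho'.1 j| + `|rho.2 j - rho'.2 j|).

Definition closure_set (S : menu -> Prop) : menu -> Prop :=
  fun rho => forall e : R, 0 < e -> exists rho', S rho' /\ l1dist rho rho' < e.

Definition convcomb (t : R) (y z : menu) : menu :=
  ([ffun j => t * y.1 j + (1 - t) * z.1 j],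
   [ffun j => t * y.2 j + (1 - t) * z.2 j]).

Definition extreme_point (S : menu -> Prop) (rho : menu) : Prop :=
  S rho /\ forall y z (t : R), S y -> S z -> 0 < t < 1 ->
    rho = convcomb t y z -> y = z.

Definition extended_extreme_set (choose : (nat -> R) -> menu -> moption) (H : R)
  (V : nat) (vs : 'I_V -> nat -> R) (eps : R) (C : menu -> Prop) : Prop :=
  (forall rho, C rho -> in_box H rho) /\
  forall mu : 'I_V -> moption, feasible choose H vs mu ->
  forall rho, extreme_point (closure_set (lambda_set choose H vs mu)) rho ->
    (lambda_set choose H vs mu rho -> C rho) /\
    (~ lambda_set choose H vs mu rho ->
       exists rho', C rho' /\ lambda_set choose H vs mu rho' /\
                    l1dist rho rho' <= eps).

End TwoPartTariffs.

(* Main.v *)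
Require Import Defs.
From mathcomp Require Import all_boot all_order all_algebra.
From mathcomp Require Import reals.
From mathcomp Require Import all_classical all_reals all_analysis.
From mathcomp Require Import ring lra.
Import Order.TTheory GRing.Theory Num.Theory.
Import numFieldTopology.Exports.
Local Open Scope ring_scope.

Set Implicit Arguments. Unset Strict Implicit.
Section Menus.
Variables (R : realType) (l K : nat).
Implicit Types (rho a b c : menu R l).

Lemma l1dist_ge0 a b : 0 <= l1dist a b.
Proof. by apply: sumr_ge0 => j _; rewrite addr_ge0. Qed.

Lemma l1dist_tri a b c : l1dist a c <= l1dist a b + l1dist b c.
Proof.
rewrite /l1dist -big_split /=; apply: ler_sum => j _.
have h1 := ler_distD (b.1 j) (a.1 j) (c.1 j).
have h2 := ler_distD (b.2 j) (a.2 j) (c.2 j).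
lra.
Qed.

Lemma l1dist_term a b j :
  `|a.1 j - b.1 j| + `|a.2 j - b.2 j| <= l1dist a b.
Proof.
rewrite /l1dist (bigD1 j) //= lerDl; apply: sumr_ge0 => i _.
by rewrite addr_ge0.
Qed.

Lemma payment_lip a b (o : moption l K) :
  `|payment a o - payment b o| <= K%:R * l1dist a b.
Proof.
rewrite /payment; case: ifP => [k0|_]; last first.
  by rewrite subr0 normr0 mulr_ge0 ?l1dist_ge0.
have hK : (o.2 <= K)%N by rewrite -ltnS ltn_ord.
have hk1 : 1 <= (o.2 : nat)%:R :> R by rewrite ler1n.
have hkK : (o.2 : nat)%:R <= K%:R :> R by rewrite ler_nat.
have ht := l1dist_term a b o.1.
set d1 := a.1 o.1 - b.1 o.1; set d2 := a.2 o.1 - b.2 o.1.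
have -> : a.1 o.1 + (o.2 : nat)%:R * a.2 o.1 - (b.1 o.1 + (o.2 : nat)%:R * b.2 o.1)
   = d1 + (o.2 : nat)%:R * d2 by rewrite /d1 /d2; ring.
rewrite -/d1 -/d2 in ht.
apply: (le_trans (ler_normD _ _)); rewrite normrM ger0_norm ?ler0n //.
have n1 := normr_ge0 d1; have n2 := normr_ge0 d2.
have : K%:R * (`|d1| + `|d2|) <= K%:R * l1dist a b.
  by rewrite ler_wpM2l ?ler0n.
nra.
Qed.

Definition Fsum (T : nat) (o : 'I_T -> moption l K) rho :=
  \sum_(t < T) payment rho (o t).

Lemma payment_conv t a b (o : moption l K) :
  payment (convcomb t a b) o = t * payment a o + (1 - t) * payment b o.
Proof.
rewrite /payment /convcomb /=; case: ifP => _; last by rewrite !mulr0 addr0.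
by rewrite !ffunE; ring.
Qed.

Lemma Fsum_conv T o t a b :
  Fsum o (convcomb t a b) = t * Fsum (T:=T) o a + (1 - t) * Fsum o b.
Proof.
rewrite /Fsum !mulr_sumr -big_split /=; apply: eq_bigr => i _.
exact: payment_conv.
Qed.

Lemma Fsum_lip T o a b :
  Fsum (T:=T) o b - T%:R * (K%:R * l1dist a b) <= Fsum o a.
Proof.
rewrite /Fsum.
have -> : T%:R * (K%:R * l1dist a b) = \sum_(i < T) (K%:R * l1dist a b).
  by rewrite sumr_const card_ord mulr_natl.
rewrite lerBlDr -big_split /=.
apply: ler_sum => i _; have := payment_lip b a (o i).
have -> : l1dist a b = l1dist b a.
  by rewrite /l1dist; apply: eq_bigr => j _; rewrite !(distrC (a.1 j)) !(distrC (a.2 j)).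
move=> h; have := ler_norm (payment b (o i) - payment a (o i)); lra.
Qed.

End Menus.

Section Topo.
Local Open Scope classical_set_scope.
Variables (R : realType) (l : nat).
Local Notation X := 'rV[R]_(l + l).

Definition psi (v : X) : menu R l :=
  ([ffun j => v ord0 (lshift l j)], [ffun j => v ord0 (rshift l j)]).
Definition phi (rho : menu R l) : X :=
  \row_(i < l + l) (match fintype.split i with inl j => rho.1 j | inr j => rho.2 j end).

Lemma psiK rho : psi (phi rho) = rho.
Proof.
case: rho => a b; rewrite /psi /phi /=; congr pair; apply/ffunP => j;
  rewrite !ffunE mxE.
  by case: splitP => k /= hk; [congr (a _); apply: val_inj|
    have := ltn_ord j; rewrite hk -ltn_subRL subnn].
case: splitP => k /= hk; last by congr (b _); apply/val_inj/eqP; rewrite -(eqn_add2l l) -hk.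
by have := ltn_ord k; rewrite -hk -ltn_subRL subnn.
Qed.

Lemma phiK v : phi (psi v) = v.
Proof.
apply/rowP => i; rewrite /phi /psi mxE.
by case: splitP => k hk; rewrite ffunE; congr (v ord0 _); apply: val_inj.
Qed.

Definition comb (t : R) (y z : X) : X := t *: y + (1 - t) *: z.

Lemma psi_comb t y z : psi (comb t y z) = convcomb t (psi y) (psi z).
Proof.
by rewrite /psi /convcomb /comb /=; congr pair; apply/ffunP => j; rewrite !ffunE !mxE.
Qed.

Lemma phi_comb t a b : phi (convcomb t a b) = comb t (phi a) (phi b).
Proof.
by rewrite -[in RHS](phiK (comb _ _ _)) psi_comb !psiK.
Qed.

Definition face (A B : set X) :=
  forall y z t, A y -> A z -> 0 < t < 1 -> B (comb t y z) -> B y /\ B z.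

Lemma face_step (A B K0 : set X) (g : X -> R) :
  closed B -> compact K0 -> B `<=` K0 -> B !=set0 -> face A B ->
  continuous g -> (forall t y z, g (comb t y z) = t * g y + (1 - t) * g z) ->
  exists B' : set X, [/\ closed B', B' `<=` B, B' !=set0, face A B' &
    (forall x y, B' x -> B y -> g y <= g x) /\ (forall x y, B' x -> B' y -> g x = g y)].
Proof.
move=> cB cK sBK neB fB cg ag.
have cpB : compact B := subclosed_compact cB cK sBK.
have cgB : {within B, continuous g} by apply: continuous_subspaceT.
have [c cB' cmax] := compact_EVT_max neB cpB cgB.
rewrite inE in cB'.
exists (B `&` [set x | g x = g c]); split.
- apply: closedI => //; apply: (preimage_closed (D := [set x | x = g c])).
    by move=> x _; apply: cg.
  exact: closed_eq.
- by move=> x [].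
- by exists c.
- move=> y z t Ay Az t01 [Bc gc].
  have [By Bz] := fB _ _ _ Ay Az t01 Bc.
  have hy := cmax y (mem_set By); have hz := cmax z (mem_set Bz).
  move: gc; rewrite /= ag => gc; case/andP: t01 => t0 t1.
  split; split => //=; nra.
- split; first by move=> x y [_ ->] By; apply: cmax; rewrite inE.
  by move=> x y [_ ->] [_ ->].
Qed.

End Topo.

Section Ext.
Local Open Scope classical_set_scope.
Variables (R : realType) (l K : nat).
Local Notation X := 'rV[R]_(l + l).

Lemma cont_sum (I : Type) (s : seq I) (h : I -> X -> R) :
  (forall i, continuous (h i)) -> continuous (fun v => \sum_(i <- s) h i v).
Proof.
move=> hc; elim: s => [|i s IH].
  under eq_fun do rewrite big_nil.
  exact: cst_continuous.
under eq_fun do rewrite big_cons.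
by move=> x; exact: (continuousD (hc i x) (IH x)).
Qed.

Lemma coord_cont (i : 'I_(l + l)) : continuous (fun v : X => v ord0 i).
Proof. exact: coord_continuous. Qed.

Lemma Fsum_cont T (o : 'I_T -> moption l K) :
  continuous (fun v : X => Fsum o (psi v)).
Proof.
rewrite /Fsum; apply: cont_sum => t.
rewrite /payment /psi /=; case: (0 < (o t).2)%N; last exact: cst_continuous.
under eq_fun do rewrite !ffunE.
move=> x.
have := continuousD (@coord_cont (lshift l (o t).1) x) (continuousM (@cst_continuous _ R ((o t).2%:R) x) (@coord_cont (rshift l (o t).1) x)).
exact.
Qed.


Lemma closure_box (H : R) (L : menu R l -> Prop) r :
  (forall r, L r -> in_box H r) -> closure_set L r ->
  forall j, `|r.1 j| <= H + 1 /\ `|r.2 j| <= H + 1.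
Proof.
move=> Lbox cr j; have [r' [Lr' dr']] := cr 1 ltr01.
have ht := l1dist_term r r' j.
have [/andP[a1 a2] /andP[b1 b2]] := Lbox r' Lr' j.
have h1 := ler_distD (r'.1 j) (r.1 j) 0.
have h2 := ler_distD (r'.2 j) (r.2 j) 0.
rewrite !subr0 !(ger0_norm a1) !(ger0_norm b1) in h1 h2.
have n1 := normr_ge0 (r.1 j - r'.1 j); have n2 := normr_ge0 (r.2 j - r'.2 j).
split; lra.
Qed.

Lemma A_closed (L : menu R l -> Prop) : closed [set v : X | closure_set L (psi v)].
Proof.
move=> v clv e e0.
have l0 : 0 < l%:R + 1 :> R by have := ler0n R l; lra.
pose d := e / (4 * (l%:R + 1)).
have d0 : 0 < d by rewrite divr_gt0 // mulr_gt0.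
have hd : d * (4 * (l%:R + 1)) = e by rewrite /d divfK // mulf_neq0 // gt_eqF.
have nb : nbhs v [set w : X | forall i, ball (v ord0 i) d (w ord0 i)].
  apply: (@filter_forall _ 'I_(l + l) (fun i (w : X) => ball (v ord0 i) d (w ord0 i)) (nbhs v)) => i.

  exact: (@coord_cont i v _ (nbhsx_ballx _ _ d0)).
have [w [Aw Bw]] := clv _ nb.
have e2 : 0 < e / 2 by rewrite divr_gt0.
have [r' [Lr' dr']] := Aw (e / 2) e2.
exists r'; split => //.
apply: le_lt_trans (l1dist_tri (psi v) (psi w) r') _.
suff : l1dist (psi v) (psi w) <= e / 2 by lra.
rewrite /l1dist; apply: (@le_trans _ _ (\sum_(j < l) (d + d))).
  apply: ler_sum => j _; rewrite !ffunE.
  have := Bw (lshift l j); have := Bw (rshift l j).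
  rewrite -!ball_normE /ball_ /=; lra.
rewrite sumr_const card_ord -mulr_natr.
have := ler0n R l; nra.
Qed.

Lemma exists_extreme (H : R) (L : menu R l -> Prop) T (o : 'I_T -> moption l K) x0 :
  (forall r, L r -> in_box H r) -> L x0 ->
  exists x, extreme_point (closure_set L) x /\ Fsum o x0 <= Fsum o x.
Proof.
move=> Lbox Lx0.
pose A := [set v : X | closure_set L (psi v)].
pose Kb := [set v : X | forall i, `[-(H+1), H+1]%classic (v ord0 i)].
have cK : compact Kb.
  by apply: (@rV_compact _ _ (fun=> `[-(H+1), H+1]%classic)) => _; apply: segment_compact.
have sAK : A `<=` Kb.
  move=> v Av i; rewrite /= in_itv /= -ler_norml.
  have := closure_box Lbox Av; rewrite -(phiK v) /phi mxE psiK.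
  by case: (fintype.split i) => j /(_ j) [].
have cA : closed A := @A_closed L.
have Ax0 : A (phi x0).
  rewrite /A /= psiK => e e0; exists x0; split => //.
  rewrite /l1dist big1 // => j _; by rewrite !subrr normr0 addr0.
have fA : face A A by move=> y z t Ay Az _ _; split.
have [B0 [cB0 sB0 neB0 fB0 [maxB0 _]]] := face_step cA cK sAK (ex_intro _ _ Ax0) fA
  (@Fsum_cont _ o) (fun t y z => etrans (congr1 (Fsum o) (psi_comb t y z)) (Fsum_conv _ _ _ _)).
have iter : forall n : nat, exists B : set X, [/\ closed B, B `<=` A, B !=set0, face A B &
    (forall x, B x -> Fsum o x0 <= Fsum o (psi x)) /\
    (forall x y, B x -> B y -> forall i : 'I_(l + l), (i < n)%N -> x ord0 i = y ord0 i)].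
  elim => [|n [B [cB sB neB fB [gB eqB]]]].
    exists B0; split => //; split => //.
    by move=> x Bx; have := maxB0 x (phi x0) Bx Ax0; rewrite psiK.
  case: (ltnP n (l + l)) => hn.
    pose i := Ordinal hn.
    have [B' [cB' sB' neB' fB' [_ eqB']]] := face_step cB cK (subset_trans sB sAK) neB fB
      (@coord_cont i) (fun t y z => ltac:(by rewrite /comb !mxE)).
    exists B'; split => //; first by move=> x /sB' /sB.
    split; first by move=> x /sB' /gB.
    move=> x y Bx By j; rewrite ltnS leq_eqVlt => /orP [/eqP hj|hj].
      have -> : j = i by apply: val_inj.
      exact: eqB'.
    exact: eqB (sB' _ Bx) (sB' _ By) j hj.
  exists B; split => //; split => // x y Bx By j _.
  by apply: eqB => //; apply: leq_trans hn.
have [B [_ sB [x Bx] fB [gB eqB]]] := iter (l + l).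
exists (psi x); split; last exact: gB.
split; first exact: sB _ Bx.
move=> y z t cy cz t01 hx.
have ex : x = comb t (phi y) (phi z) by rewrite -phi_comb -hx phiK.
have Ay : A (phi y) by rewrite /A /= psiK.
have Az : A (phi z) by rewrite /A /= psiK.
have [By Bz] := fB _ _ _ Ay Az t01 (eq_ind x B Bx _ ex).
rewrite -(psiK y) -(psiK z); congr psi; apply/rowP => i.
by rewrite (eqB _ _ By Bx i (ltn_ord i)) (eqB _ _ Bz Bx i (ltn_ord i)).
Qed.

End Ext.

Lemma l1dist_sym (R : realType) (l : nat) (a b : menu R l) : l1dist a b = l1dist b a.
Proof.
by rewrite /l1dist; apply: eq_bigr => j _; rewrite !(distrC (a.1 j)) !(distrC (a.2 j)).
Qed.

Unset Implicit Arguments. Set Strict Implicit.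

Theorem mainTheorem8 (R : realType) (l K V T : nat) (H : R)
  (vs : 'I_V -> nat -> R)
  (choose : (nat -> R) -> menu R l -> moption l K)
  (eps : R) (C : menu R l -> Prop)
  (b : 'I_T -> 'I_V) (rho_star : menu R l) :
  (forall i, is_valuation K H (vs i)) ->
  utility_maximizing choose ->
  0 < eps ->
  extended_extreme_set choose H vs eps C ->
  in_box H rho_star ->
  (forall rho, in_box H rho ->
     \sum_(t < T) revenue choose (vs (b t)) rho <=
     \sum_(t < T) revenue choose (vs (b t)) rho_star) ->
  exists2 rho, C rho &
    \sum_(t < T) revenue choose (vs (b t)) rho >=
    \sum_(t < T) revenue choose (vs (b t)) rho_star - 2 * K%:R * eps * T%:R.
Proof.
move=> _ _ eps0 [Cbox hC] box_star _.
pose mu := fun i => choose (vs i) rho_star.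
pose L := lambda_set choose H vs mu.
have Lstar : L rho_star by split.
have Lbox : forall r, L r -> in_box H r by move=> r [].
pose o := fun t => mu (b t).
have revF : forall r, L r -> \sum_(t < T) revenue choose (vs (b t)) r = Fsum o r.
  by move=> r [_ ind]; apply: eq_bigr => t _; rewrite /revenue ind.
have [x [ex Fx]] := exists_extreme o Lbox Lstar.
have feas : feasible choose H vs mu by exists rho_star.
have [h1 h2] := hC mu feas x ex.
have hT := ler0n R T; have hK := ler0n R K.
have hpos : 0 <= T%:R * (K%:R * eps) by rewrite mulr_ge0 // mulr_ge0 // ltW.
have e2 : 2 * K%:R * eps * T%:R = 2 * (T%:R * (K%:R * eps)) by ring.
rewrite e2.
case: (pselect (L x)) => Lx.
  exists x; first exact: h1 Lx.
  rewrite (revF x Lx) (revF _ Lstar); lra.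
have [r' [Cr' [Lr' dr']]] := h2 Lx.
exists r' => //.
rewrite (revF _ Lr') (revF _ Lstar).
have := Fsum_lip o r' x; rewrite l1dist_sym.
have : T%:R * (K%:R * l1dist x r') <= T%:R * (K%:R * eps).
  by rewrite ler_wpM2l // ler_wpM2l.
lra.
Qed.
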